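(* Let $m,n\geq 2$. There exists a $\mathrm{M}^0_{\mathbb Z_{mn+1}^*}(m,n;n,m)$ (an $m\times n$ array with no empty cells) if and only if $mn+1$ is odd and $mn+1>5$.
   Context: For an abelian group $\Gamma$ and $\Omega\subseteq\Gamma$, a zero-sum magic partially filled array $\mathrm{M}^0_\Omega(m,n;s,k)$ is an $m\times n$ array, some cells of which may be empty, with entries in $\Omega$ in which every element of $\Omega$ appears exactly once, each row has exactly $s$ and each column exactly $k$ filled cells, and all row and column sums equal $0_\Gamma$. $\mathbb Z_N$ is the cyclic group of order $N$ and $\mathbb Z_N^*=\mathbb Z_N\setminus\{0\}$. *)

(* Defs.v *)
From HB Require Import structures.
From mathcomp Require Import all_boot all_order all_algebra.
Set Implicit Arguments. Unset Strict Implicit. Unset Printing Implicit Defensive.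
Import GRing.Theory.
Local Open Scope ring_scope.

(* A partially filled m x n array over a (finite) abelian group G:
   cell (i,j) is [None] if empty, [Some x] if it contains x. *)

Definition zero_sum_magic_pfa (G : finZmodType) (Omega : {set G})
    (m n s k : nat) (A : 'M[option G]_(m, n)) : Prop :=
  (forall i j x, A i j = Some x -> x \in Omega) /\
  (forall x, x \in Omega -> #|[set p : 'I_m * 'I_n | A p.1 p.2 == Some x]| = 1%N) /\
  (forall i, #|[set j | A i j != None]| = s) /\
  (forall j, #|[set i | A i j != None]| = k) /\
  (forall i, \sum_(j < n) odflt 0 (A i j) = 0) /\
  (forall j, \sum_(i < m) odflt 0 (A i j) = 0).

Definition Zstar (N : nat) : {set 'Z_N} := [set x | x != 0].

(* Main.v *)
Require Import Defs.
From HB Require Import structures.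
From mathcomp Require Import all_boot all_order all_algebra.
From mathcomp Require Import zify ring.
Set Implicit Arguments. Unset Strict Implicit. Unset Printing Implicit Defensive.
Import GRing.Theory Num.Theory.

Section Conv.
Local Open Scope ring_scope.

Definition good (m n : nat) (f : nat -> nat -> int) : Prop :=
  [/\ (forall i j, (i < m)%N -> (j < n)%N -> f i j != 0 /\ (2 * `|f i j| <= m * n)%N),
      (forall i j i' j', (i < m)%N -> (j < n)%N -> (i' < m)%N -> (j' < n)%N ->
          f i j = f i' j' -> i = i' /\ j = j'),
      (forall i, (i < m)%N -> exists k : int, \sum_(j < n) f i j = k * (m * n + 1)%N%:Z) &
      (forall j, (j < n)%N -> exists k : int, \sum_(i < m) f i j = k * (m * n + 1)%N%:Z)].

Lemma good_tr m n f : good m n f -> good n m (fun i j => f j i).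
Proof.
case=> hb hi hr hc; split.
- by move=> i j hi0 hj; rewrite [(n * m)%N]mulnC; apply: hb.
- by move=> i j i' j' h1 h2 h3 h4 he; have [-> ->] := hi _ _ _ _ h2 h1 h4 h3 he.
- by move=> i hi'; rewrite mulnC; apply: hc.
- by move=> j hj; rewrite [(n * m)%N]mulnC; apply: hr.
Qed.

Lemma Zp_int0 (N : nat) (z : int) : (1 < N)%N -> (`|z| < N)%N -> (z%:~R : 'Z_N) = 0 -> z = 0.
Proof.
move=> N1; case: z => k /= hk.
  rewrite -pmulrn => /(congr1 (@nat_of_ord _)); rewrite val_Zp_nat //= modn_small //.
  by move=> ->.
rewrite NegzE mulrNz -pmulrn => /eqP; rewrite oppr_eq0 => /eqP/(congr1 (@nat_of_ord _)).
by rewrite val_Zp_nat //= modn_small.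
Qed.

Lemma intr_sumZ (R : pzRingType) (I : Type) (r : seq I) (F : I -> int) :
  ((\sum_(i <- r) F i)%:~R : R) = \sum_(i <- r) (F i)%:~R.
Proof. by rewrite mulrz_sumr. Qed.

Lemma good_pfa m n f : (0 < m)%N -> (0 < n)%N -> good m n f ->
  exists A : 'M[option 'Z_(m * n + 1)]_(m, n),
      @zero_sum_magic_pfa _ (Zstar (m * n + 1)) m n n m A.
Proof.
move=> m0 n0 [hb hi hr hc].
set N := (m * n + 1)%N.
have N1 : (1 < N)%N by rewrite /N; rewrite addn1 ltnS muln_gt0 m0.
pose g (p : 'I_m * 'I_n) : 'Z_N := (f p.1 p.2)%:~R.
exists (\matrix_(i, j) Some (g (i, j))).
have gnz p : g p != 0.
  apply/eqP => /Zp_int0 h.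
  have [/eqP hnz hle] := hb p.1 p.2 (ltn_ord _) (ltn_ord _).
  apply: hnz; apply: h => //; rewrite /N; lia.
have ginj : injective g.
  move=> [i j] [i' j'] /= /eqP; rewrite -subr_eq0 -intrB => /eqP hz.
  have [_ hle] := hb i j (ltn_ord _) (ltn_ord _).
  have [_ hle'] := hb i' j' (ltn_ord _) (ltn_ord _).
  have /eqP he : f i j - f i' j' = 0.
    apply: (Zp_int0 N1 _ hz); rewrite /N /=; lia.
  move: he; rewrite subr_eq0 => /eqP he.
  have [hi1 hj1] := hi _ _ _ _ (ltn_ord i) (ltn_ord j) (ltn_ord i') (ltn_ord j') he.
  by rewrite (val_inj hi1) (val_inj hj1).
have cardZ : #|Zstar N| = (m * n)%N.
  rewrite /Zstar.
  have -> : [set x : 'Z_N | x != 0] = ~: [set 0] by apply/setP => x; rewrite !inE.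
  rewrite cardsC1 card_ord Zp_cast //= /N addn1.
  by [].
have imE : g @: setT = Zstar N.
  apply/eqP; rewrite eqEcard; apply/andP; split.
    by apply/subsetP => x /imsetP [p _ ->]; rewrite inE gnz.
  by rewrite cardZ card_imset // cardsT card_prod !card_ord.
split; [|split; [|split; [|split; [|split]]]].
- move=> i j x; rewrite mxE => -[<-]; by rewrite -imE imset_f.
- move=> x; rewrite -imE => /imsetP [p _ ->].
  rewrite (_ : [set q : 'I_m * 'I_n | _] = [set p]) ?cards1 //.
  apply/setP => q; rewrite !inE mxE; apply/eqP/eqP => [[]|->].
    by move/ginj; case: q.
  by case: p.
- move=> i; rewrite (_ : [set j | _] = setT) ?cardsT ?card_ord //.
  by apply/setP => j; rewrite !inE mxE.
- move=> j; rewrite (_ : [set i | _] = setT) ?cardsT ?card_ord //.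
  by apply/setP => i; rewrite !inE mxE.
- move=> i; have [k hk] := hr i (ltn_ord i).
  rewrite (eq_bigr (fun j : 'I_n => (f i j)%:~R)); last by move=> j _; rewrite mxE.
  by rewrite -intr_sumZ hk intrM -pmulrn pchar_Zp // mulr0.
- move=> j; have [k hk] := hc j (ltn_ord j).
  rewrite (eq_bigr (fun i : 'I_m => (f i j)%:~R)); last by move=> i _; rewrite mxE.
  by rewrite -intr_sumZ hk intrM -pmulrn pchar_Zp // mulr0.
Qed.

End Conv.
Ltac splitifs := repeat (case: ifP => ?).

Section Sums.
Local Open Scope ring_scope.

Lemma sum_shift a L (F : nat -> int) :
  \sum_(0 <= i < a + L) F i = \sum_(0 <= i < a) F i + \sum_(0 <= i < L) F (a + i)%N.
Proof.
rewrite (big_cat_nat _ (n := a)) ?leq_addr //=; congr (_ + _).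
rewrite -{1}(add0n a) big_addn addKn; apply: eq_bigr => i _; by rewrite addnC.
Qed.

Lemma sum_group k q (F : nat -> int) :
  \sum_(0 <= i < k * q) F i = \sum_(0 <= u < q) \sum_(0 <= r < k) F (k * u + r)%N.
Proof.
elim: q => [|q IH]; first by rewrite muln0 !big_geq.
by rewrite mulnSr sum_shift IH big_nat_recr.
Qed.

Lemma sum4 (F : nat -> int) : \sum_(0 <= r < 4) F r = F 0%N + F 1%N + F 2%N + F 3%N.
Proof. by rewrite !big_nat_recr //= big_geq // add0r. Qed.

Lemma sum2 (F : nat -> int) : \sum_(0 <= r < 2) F r = F 0%N + F 1%N.
Proof. by rewrite !big_nat_recr //= big_geq // add0r. Qed.

Lemma sum3 (F : nat -> int) : \sum_(0 <= r < 3) F r = F 0%N + F 1%N + F 2%N.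
Proof. by rewrite !big_nat_recr //= big_geq // add0r. Qed.

Lemma sum0 n (F : nat -> int) : (forall i, (i < n)%N -> F i = 0) -> \sum_(0 <= i < n) F i = 0.
Proof. by move=> h; rewrite big_nat big1 // => i /andP [_ /h]. Qed.

End Sums.

Section CP.
Local Open Scope ring_scope.

Definition pm (b : bool) (x : nat) : int := if b then x%:Z else - x%:Z.
Definition qpat (r : nat) : bool := (r == 0)%N || (r == 3)%N.

Lemma pm_abs b x : absz (pm b x) = x.
Proof. by case: b; rewrite /pm ?abszN. Qed.

Lemma pm_eq b b' x x' : (0 < x)%N -> pm b x = pm b' x' -> b = b' /\ x = x'.
Proof. by case: b; case: b'; rewrite /pm => hx e; [split; lia | exfalso; lia | exfalso; lia | split; lia]. Qed.

Lemma pm_neq0 b x : (0 < x)%N -> pm b x != 0.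
Proof. by case: b; rewrite /pm => h; lia. Qed.

Lemma qt_sum Q base :
  \sum_(0 <= v < 4 * Q) pm (qpat (v %% 4)) (base + v) = 0.
Proof.
rewrite sum_group; apply: sum0 => u _; rewrite sum4 !(mulnC 4 u) !modnMDl /= /pm /=; lia.
Qed.

Definition cpa (L K b i : nat) : nat :=
  if (L %% 4 == 0)%N || (L %% 4 == 3)%N then (b + i + 1)%N
  else if i == 0%N then K else if i == 1%N then (K - 1)%N else (b + i - 1)%N.

Definition cps (L i : nat) : bool :=
  if (L %% 4 == 0)%N then qpat (i %% 4)
  else if (L %% 4 == 3)%N then (if (i < 3)%N then i != 2%N else qpat ((i - 3) %% 4))
  else if (L %% 4 == 2)%N then (if (i < 2)%N then true else if (i < 6)%N then odd i else qpat ((i - 2) %% 4))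
  else (if (i < 2)%N then true else if (i < 5)%N then ~~ odd i else qpat ((i - 5) %% 4)).

Definition cpx L K b i : int := pm (cps L i) (cpa L K b i).


Lemma cpa_pos L K b i : (2 <= K)%N -> (0 < cpa L K b i)%N.
Proof. rewrite /cpa; splitifs; lia. Qed.

Lemma cpa_inj L K b i i' : (i < L)%N -> (i' < L)%N -> (b + L <= K)%N ->
  cpa L K b i = cpa L K b i' -> i = i'.
Proof. rewrite /cpa; splitifs; lia. Qed.

Lemma cpa_le L K b i : (i < L)%N -> (b + L <= K)%N -> (cpa L K b i <= K)%N.
Proof. rewrite /cpa; splitifs; lia. Qed.

Lemma cp_sum L K b : (0 < K)%N ->
  ((L %% 4 == 2)%N -> (6 <= L)%N) -> ((L %% 4 == 1)%N -> (5 <= L)%N) -> (odd L -> b = 0%N) ->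
  \sum_(0 <= i < L) cpx L K b i =
    (if (L %% 4 == 1)%N || (L %% 4 == 2)%N then (2 * K + 1)%N%:Z else 0).
Proof.
move=> hK h2 h1 ho.
set F := cpx L K b.
have hL := divn_eq L 4.
set Q := (L %/ 4)%N in hL.
have : (L %% 4 < 4)%N by rewrite ltn_mod.
case hr: (L %% 4)%N => [|[|[|[|r]]]] // _; rewrite hr in hL; rewrite /=.
- rewrite {1}hL addn0 mulnC -[RHS](qt_sum Q (b + 1)).
  apply: eq_big_nat => i hi; rewrite /F /cpx /cps /cpa hr /=; congr pm; lia.
- have eL : L = (5 + 4 * (Q - 1))%N by move: h1; rewrite hr; move=> /(_ isT); lia.
  rewrite {1}eL sum_shift.
  have -> : \sum_(0 <= i < 4 * (Q - 1)) F (5 + i)%N = 0.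
    rewrite -[RHS](qt_sum (Q - 1) (b + 4)).
    apply: eq_big_nat => i hi; rewrite /F /cpx /cps /cpa hr /=.
    have -> : (5 + i - 5 = i)%N by lia.

    congr pm; lia.
  rewrite !big_nat_recr //= big_geq // /F /cpx /cps /cpa hr /= /pm /=.
  have hb : b = 0%N by apply: ho; lia.
  rewrite hb; lia.
- have eL : L = (6 + 4 * (Q - 1))%N by move: h2; rewrite hr; move=> /(_ isT); lia.
  rewrite {1}eL sum_shift.
  have -> : \sum_(0 <= i < 4 * (Q - 1)) F (6 + i)%N = 0.
    rewrite -[RHS](qt_sum (Q - 1) (b + 5)).
    apply: eq_big_nat => i hi; rewrite /F /cpx /cps /cpa hr /=.
    have -> : ((6 + i - 2) %% 4 = i %% 4)%N.
      by rewrite (_ : (6 + i - 2 = i + 4 * 1)%N) ?modnMDl //; lia.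

    congr pm; lia.
  rewrite !big_nat_recr //= big_geq // /F /cpx /cps /cpa hr /= /pm /=.
  lia.
- rewrite {1}hL.
  rewrite (_ : (Q * 4 + 3 = 3 + 4 * Q)%N); last by lia.
  rewrite sum_shift.
  have -> : \sum_(0 <= i < 4 * Q) F (3 + i)%N = 0.
    rewrite -[RHS](qt_sum Q (b + 4)).
    apply: eq_big_nat => i hi; rewrite /F /cpx /cps /cpa hr /=.
    have -> : (3 + i - 3 = i)%N by lia.

    congr pm; lia.
  rewrite !big_nat_recr //= big_geq // /F /cpx /cps /cpa hr /= /pm /=.
  have hb : b = 0%N by apply: ho; lia.
  rewrite hb; lia.
Qed.

End CP.

Section B2.
Local Open Scope ring_scope.

Definition b2f (m i j : nat) : int := pm ((j == 0%N) == cps m i) (cpa m m 0 i).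

Lemma pmN b x : pm (~~ b) x = - pm b x.
Proof. by case: b; rewrite /pm ?opprK. Qed.

Lemma b2_good m : (3 <= m)%N -> good m 2 (b2f m).
Proof.
move=> m3; split.
- move=> i j hi hj; split; first by apply: pm_neq0; apply: cpa_pos; lia.
  rewrite /b2f pm_abs; have := @cpa_le m m 0 i hi; lia.
- move=> i j i' j' hi hj hi' hj' e.
  have m2 : (2 <= m)%N by lia.
  have [hs ha] := pm_eq (@cpa_pos m m 0 i m2) e.
  have ii := cpa_inj hi hi' (leqnn _) ha; subst i'; split => //; clear e.
  move: hs; case: (cps m i); case: j hj => [|[|j]] //; case: j' hj' => [|[|j']] //.
- move=> i hi; exists 0; rewrite mul0r -(big_mkord xpredT (fun j => b2f m i j)) sum2.
  by rewrite /b2f /=; case: (cps m i); rewrite /pm /=; lia.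
- move=> j hj; set k : int := if (m %% 4 == 1)%N || (m %% 4 == 2)%N then 1 else 0.
  have hs : \sum_(0 <= i < m) cpx m m 0 i = k * (m * 2 + 1)%N%:Z.
    rewrite cp_sum; first (rewrite /k; case: ifP => _; rewrite ?mul1r ?mul0r //; congr Posz; lia).
    + lia.
    + lia.
    + lia.
    + by [].
  case: j hj => [|[|j]] // _.
    exists k; rewrite -hs -(big_mkord xpredT (fun i => b2f m i 0)).
    by apply: eq_bigr => i _; rewrite /b2f /cpx /=; case: (cps m i).
  exists (- k); rewrite mulNr -hs -sumrN -(big_mkord xpredT (fun i => b2f m i 1)).
  by apply: eq_bigr => i _; rewrite /b2f /cpx /=; case: (cps m i); rewrite /pm ?opprK.
Qed.
End B2.
Section C3.
Local Open Scope ring_scope.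

Definition cls (T t : nat) : nat :=
  if [&& odd T, (3 <= T)%N & t == T %/ 2]%N then 2%N
  else if [&& odd T, (3 <= T)%N & t == T %/ 2 + 1]%N then 3%N
  else if odd t then 1%N else 0%N.

Definition p120 (j : nat) : nat := if j == 0%N then 1%N else if j == 1%N then 2%N else 0%N.
Definition p021 (j : nat) : nat := if j == 0%N then 0%N else if j == 1%N then 2%N else 1%N.
Definition p102 (j : nat) : nat := if j == 0%N then 1%N else if j == 1%N then 0%N else 2%N.
Definition p201 (j : nat) : nat := if j == 0%N then 2%N else if j == 1%N then 0%N else 1%N.

Definition c3k (cl : nat) (ty : bool) (j : nat) : nat :=
  match cl with
  | 0 => if ty then p120 j else j
  | 1 => if ty then p102 j else p021 j
  | 2 => p201 j
  | _ => if ty then j else p120 j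
  end.

Definition c3m (T t : nat) (ty : bool) (k : nat) : nat :=
  if ty then (if k == 0%N then T + 1 + t else if k == 1%N then 1 + t else T + 2 + 2 * t)%N
  else (if k == 0%N then T - t else if k == 1%N then 2 * T + 1 + t else T + 1 + 2 * t)%N.

Definition c3s (ty : bool) (k : nat) : bool :=
  if ty then k == 2%N else k != 1%N.

Definition c3e (T t : nat) (ty : bool) (k : nat) : int := pm (c3s ty k) (c3m T t ty k).

Definition c3v (T i j : nat) : int :=
  c3e T (i %/ 2) (odd i) (c3k (cls T (i %/ 2)) (odd i) j).

Lemma c3k_lt cl ty j : (j < 3)%N -> (c3k cl ty j < 3)%N.
Proof.
by case: cl => [|[|[|cl]]]; case: ty; rewrite /c3k /p120 /p021 /p102 /p201;
  case: j => [|[|[|j]]].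
Qed.

Lemma c3k_inj cl ty j j' : (j < 3)%N -> (j' < 3)%N -> c3k cl ty j = c3k cl ty j' -> j = j'.
Proof.
by case: cl => [|[|[|cl]]]; case: ty; rewrite /c3k /p120 /p021 /p102 /p201;
  case: j => [|[|[|j]]]; case: j' => [|[|[|j']]].
Qed.

Lemma c3m_pos T t ty k : (t < T)%N -> (0 < c3m T t ty k)%N.
Proof. by case: ty; rewrite /c3m; case: ifP => _; try case: ifP => _; lia. Qed.

Lemma c3m_le T t ty k : (t < T)%N -> (c3m T t ty k <= 3 * T)%N.
Proof. by case: ty; rewrite /c3m; case: ifP => _; try case: ifP => _; lia. Qed.

Lemma c3_inj T t t' ty ty' k k' : (t < T)%N -> (t' < T)%N -> (k < 3)%N -> (k' < 3)%N ->
  c3m T t ty k = c3m T t' ty' k' -> c3s ty k = c3s ty' k' -> [/\ t = t', ty = ty' & k = k'].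
Proof.
move=> ht ht' hk hk'.
case: ty; case: ty'; rewrite /c3m /c3s;
  case: k hk => [|[|[|k]]] // _; case: k' hk' => [|[|[|k']]] //= _ e s;
  try (by exfalso; lia); split => //; lia.
Qed.

Lemma c3_row T t ty cl : (t < T)%N ->
  \sum_(0 <= j < 3) c3e T t ty (c3k cl ty j) = 0.
Proof.
move=> ht; rewrite sum3.
by case: cl => [|[|[|cl]]]; case: ty; rewrite /c3e /c3k /p120 /p021 /p102 /p201 /c3m /c3s /pm /=; lia.
Qed.

End C3.
Section C3col.
Local Open Scope ring_scope.

Lemma sum_lin U (a b : int) :
  2 * \sum_(0 <= v < U) (a + b * v%:Z) = 2 * a * U%:Z + b * U%:Z * (U%:Z - 1).
Proof.
elim: U => [|U IH]; first by rewrite big_geq //; ring.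
rewrite big_nat_recr //= mulrDr IH intS; ring.
Qed.

Lemma sum_diff2 N a (F G : nat -> int) : (a.+2 <= N)%N ->
  (forall u, (u < N)%N -> u != a -> u != a.+1 -> F u = G u) ->
  \sum_(0 <= u < N) F u = \sum_(0 <= u < N) G u + (F a - G a) + (F a.+1 - G a.+1).
Proof.
move=> ha h.
have eN : N = (a + (2 + (N - a.+2)))%N by lia.
rewrite eN !sum_shift !sum2.
have -> : \sum_(0 <= i < a) F i = \sum_(0 <= i < a) G i.
  by apply: eq_big_nat => i hi; apply: h; lia.
have -> : \sum_(0 <= i < N - a.+2) F (a + (2 + i))%N = \sum_(0 <= i < N - a.+2) G (a + (2 + i))%N.
  by apply: eq_big_nat => i hi; apply: h; lia.
rewrite !addn0 !addn1; ring.
Qed.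

Definition hv (T cl u j : nat) : int :=
  match cl, j with
  | 0, 0 => T%:Z - 1 - 2 * u%:Z
  | 0, 1 => 1 - T%:Z + u%:Z
  | 0, _ => u%:Z
  | 1, 0 => T%:Z - 1 - 2 * u%:Z
  | 1, 1 => u%:Z
  | 1, _ => 1 - T%:Z + u%:Z
  | 2, 0 => 2 * T%:Z + 3 + 4 * u%:Z
  | 2, 1 => -1 - 2 * u%:Z
  | 2, _ => -2 * T%:Z - 2 - 2 * u%:Z
  | _, 0 => -3 * T%:Z - 2 - 2 * u%:Z
  | _, 1 => T%:Z + u%:Z
  | _, _ => 2 * T%:Z + 2 + u%:Z
  end.

Lemma hc_val T cl u j : (u < T)%N -> (j < 3)%N ->
  c3e T u false (c3k cl false j) + c3e T u true (c3k cl true j) = hv T cl u j.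
Proof.
move=> hu hj.
case: cl => [|[|[|cl]]]; case: j hj => [|[|[|j]]] // _;
  rewrite /c3e /c3k /p120 /p021 /p102 /p201 /c3m /c3s /pm /hv /=; lia.
Qed.

Lemma c3v_pair T u j : c3v T (2 * u) j + c3v T (2 * u + 1) j =
  c3e T u false (c3k (cls T u) false j) + c3e T u true (c3k (cls T u) true j).
Proof.
rewrite /c3v.
have -> : (2 * u %/ 2 = u)%N by lia.
have -> : ((2 * u + 1) %/ 2 = u)%N by lia.
have -> : odd (2 * u) = false by lia.
have -> : odd (2 * u + 1) = true by lia.
by [].
Qed.

Lemma c3_col T j : (0 < T)%N -> (j < 3)%N -> \sum_(0 <= i < 2 * T) c3v T i j = 0.
Proof.
move=> hT hj.
rewrite sum_group.
have -> : \sum_(0 <= u < T) \sum_(0 <= r < 2) c3v T (2 * u + r) j =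
          \sum_(0 <= u < T) hv T (cls T u) u j.
  apply: eq_big_nat => u hu; rewrite sum2 addn0 c3v_pair hc_val //; lia.
case oT: (odd T).
-
  have [U eU] : exists U, T = (2 * U + 1)%N by exists (T %/ 2)%N; lia.
  case: U eU => [|U] eU.
    by rewrite eU big_nat1 /cls /=; case: j hj => [|[|[|j]]].
  set G := fun u => hv T (odd u) u j.
  rewrite (@sum_diff2 T (T %/ 2)%N _ G); first last.
  - move=> u hu h1 h2; rewrite /G /cls oT.
    have -> : (3 <= T)%N by lia.
    rewrite /= ifF; last by apply/negbTE.
    rewrite ifF; last by rewrite addn1; apply/negbTE.
    by case: (odd u).
  - lia.
  have -> : \sum_(0 <= u < T) G u = \sum_(0 <= u < 2 * U.+1) G u + G (2 * U.+1)%N.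
    by rewrite {1}eU sum_shift big_nat1 addn0.
  set V := U.+1 in eU *.
  have hV : (T %/ 2 = V)%N by lia.
  rewrite hV.
  have c2 : cls T V = 2%N by rewrite /cls oT hV eqxx /=; have -> : (3 <= T)%N by lia.
  have c3 : cls T V.+1 = 3%N.
    rewrite /cls oT hV /=; have -> : (3 <= T)%N by lia.
    by rewrite /= ifF ?addn1 ?eqxx //; lia.
  rewrite c2 c3 sum_group.
  set S := \sum_(0 <= u < V) _.
  have eT : T%:Z = 2 * V%:Z + 1 by rewrite eU; lia.
  have : (j = 0 \/ j = 1 \/ j = 2)%N by lia.
  case=> [ej|[ej|ej]]; subst j.
  - have hS : 2 * S = 4 * V%:Z.
      have -> : S = \sum_(0 <= v < V) ((2 * T%:Z - 4) + (-8) * v%:Z).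
        apply: eq_big_nat => v hv; rewrite sum2 /G.
        have -> : odd (2 * v + 0) = false by lia.
        have -> : odd (2 * v + 1) = true by lia.
        rewrite /hv /=; lia.
      rewrite sum_lin eT; ring.
    rewrite /G.
    have -> : odd (2 * V) = false by lia.
    case oV: (odd V).
    + have -> : odd V.+1 = false by move: oV; lia.
      rewrite /hv /=; lia.
    + have -> : odd V.+1 = true by move: oV; lia.
      rewrite /hv /=; lia.
  - have hS : 2 * S = - 2 * V%:Z.
      have -> : S = \sum_(0 <= v < V) ((2 - T%:Z) + 4 * v%:Z).
        apply: eq_big_nat => v hv; rewrite sum2 /G.
        have -> : odd (2 * v + 0) = false by lia.
        have -> : odd (2 * v + 1) = true by lia.
        rewrite /hv /=; lia.
      rewrite sum_lin eT; ring.
    rewrite /G.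
    have -> : odd (2 * V) = false by lia.
    case oV: (odd V).
    + have -> : odd V.+1 = false by move: oV; lia.
      rewrite /hv /=; lia.
    + have -> : odd V.+1 = true by move: oV; lia.
      rewrite /hv /=; lia.
  - have hS : 2 * S = - 2 * V%:Z.
      have -> : S = \sum_(0 <= v < V) ((2 - T%:Z) + 4 * v%:Z).
        apply: eq_big_nat => v hv; rewrite sum2 /G.
        have -> : odd (2 * v + 0) = false by lia.
        have -> : odd (2 * v + 1) = true by lia.
        rewrite /hv /=; lia.
      rewrite sum_lin eT; ring.
    rewrite /G.
    have -> : odd (2 * V) = false by lia.
    case oV: (odd V).
    + have -> : odd V.+1 = false by move: oV; lia.
      rewrite /hv /=; lia.
    + have -> : odd V.+1 = true by move: oV; lia.
      rewrite /hv /=; lia.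
-
  have [U eU] : exists U, T = (2 * U)%N by exists (T %/ 2)%N; lia.
  rewrite {1}eU sum_group.
  have eT : T%:Z = 2 * U%:Z by rewrite eU; lia.
  have cl v : cls T v = odd v by rewrite /cls oT /=.
  have : (j = 0 \/ j = 1 \/ j = 2)%N by lia.
  case=> [ej|[ej|ej]]; subst j.
  - have hS : 2 * \sum_(0 <= u < U) \sum_(0 <= r < 2) hv T (cls T (2 * u + r)%N) (2 * u + r)%N 0 = 0.
      have -> : \sum_(0 <= u < U) \sum_(0 <= r < 2) hv T (cls T (2 * u + r)%N) (2 * u + r)%N 0
          = \sum_(0 <= v < U) ((2 * T%:Z - 4) + (-8) * v%:Z).
        apply: eq_big_nat => v hv; rewrite sum2 !cl.
        have -> : odd (2 * v + 0) = false by lia.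
        have -> : odd (2 * v + 1) = true by lia.
        rewrite /hv /=; lia.
      rewrite sum_lin eT; ring.
    lia.
  - have hS : 2 * \sum_(0 <= u < U) \sum_(0 <= r < 2) hv T (cls T (2 * u + r)%N) (2 * u + r)%N 1 = 0.
      have -> : \sum_(0 <= u < U) \sum_(0 <= r < 2) hv T (cls T (2 * u + r)%N) (2 * u + r)%N 1
          = \sum_(0 <= v < U) ((2 - T%:Z) + 4 * v%:Z).
        apply: eq_big_nat => v hv; rewrite sum2 !cl.
        have -> : odd (2 * v + 0) = false by lia.
        have -> : odd (2 * v + 1) = true by lia.
        rewrite /hv /=; lia.
      rewrite sum_lin eT; ring.
    lia.
  - have hS : 2 * \sum_(0 <= u < U) \sum_(0 <= r < 2) hv T (cls T (2 * u + r)%N) (2 * u + r)%N 2 = 0.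
      have -> : \sum_(0 <= u < U) \sum_(0 <= r < 2) hv T (cls T (2 * u + r)%N) (2 * u + r)%N 2
          = \sum_(0 <= v < U) ((2 - T%:Z) + 4 * v%:Z).
        apply: eq_big_nat => v hv; rewrite sum2 !cl.
        have -> : odd (2 * v + 0) = false by lia.
        have -> : odd (2 * v + 1) = true by lia.
        rewrite /hv /=; lia.
      rewrite sum_lin eT; ring.
    lia.
Qed.
End C3col.
Section MQ.
Lemma mulQ_inj p q p' q' (R : nat) : (q < R)%N -> (q' < R)%N ->
  (p * R + q = p' * R + q')%N -> p = p' /\ q = q'.
Proof.
move=> hq hq' e.
have R0 : (0 < R)%N by lia.
have h1 := congr1 (fun x => x %/ R)%N e; have h2 := congr1 (fun x => x %% R)%N e.
move: h1 h2 => /=; rewrite !divnMDl // !modnMDl !divn_small // !modn_small //.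
by rewrite !addn0 => -> ->.
Qed.
End MQ.

Section B1.
Local Open Scope ring_scope.
Variables m n : nat.
Hypotheses (hm4 : (4 <= m)%N) (hme : ~~ odd m) (hn3 : (3 <= n)%N).

Definition T := (m %/ 2)%N.
Definition K := (T * n)%N.
Definition c1 := if odd n then 3%N else 0%N.
Definition hasCP := ((n %% 4 == 1)%N || (n %% 4 == 2)%N).
Definition c2 := (c1 + (if hasCP then 2 else 0))%N.
Definition b0 := if odd n then (3 * T)%N else 0%N.
Definition Lq := if (m %% 4 == 0)%N then m else (m - 2)%N.
Definition s0 := (b0 + (if hasCP then Lq else 0))%N.
Definition Q := ((n - c2) %/ 4)%N.

Definition stm i j := (s0 + 1 + 4 * ((i %/ 2) * Q + (j - c2) %/ 4) + (j - c2) %% 4)%N.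
Definition sts i j := qpat ((j - c2) %% 4) == ~~ odd i.

Definition bf (i j : nat) : int :=
  if (j < c1)%N then c3v T i j
  else if (j < c2)%N then pm ((j == c1) == cps m i) (cpa m K b0 i)
  else pm (sts i j) (stm i j).

Fact mT : m = (2 * T)%N.
Proof. rewrite /T; lia. Qed.

Fact T2 : (2 <= T)%N.
Proof. rewrite /T; lia. Qed.

Fact params :
  [/\ (c1 <= c2 <= n)%N, (n - c2)%N = (4 * Q)%N, K = (T * n)%N &
  [\/ [/\ c1 = 0%N, c2 = 0%N, b0 = 0%N, s0 = 0%N & (4 * (T * Q))%N = K],
      [/\ c1 = 3%N, c2 = 3%N, b0 = (3 * T)%N, s0 = (3 * T)%N & (3 * T + 4 * (T * Q))%N = K],
      [/\ c1 = 0%N, c2 = 2%N, b0 = 0%N, s0 = Lq & (2 * T + 4 * (T * Q))%N = K] |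
      [/\ c1 = 3%N, c2 = 5%N, b0 = (3 * T)%N, s0 = (3 * T + Lq)%N & (5 * T + 4 * (T * Q))%N = K]]].
Proof.
have hQ : (n - c2)%N = (4 * Q)%N.
  rewrite /Q /c2 /c1 /hasCP; case: ifP => on; case: ifP => hc; lia.
have hK : K = (T * (c2 + 4 * Q))%N by rewrite -hQ /K; congr muln; rewrite /c2 /c1 /hasCP; case: ifP => on; case: ifP => hc; lia.
split => //.
- rewrite /c2 /c1 /hasCP; case: ifP => on; case: ifP => hc; lia.
- rewrite hK mulnDr mulnCA.
  rewrite /s0 /b0 /c2 /c1 /hasCP; case: ifP => on; case: ifP => hc.
  + by constructor 4; split; lia.
  + by constructor 2; split; lia.
  + by constructor 3; split; lia.
  + by constructor 1; split; lia.
Qed.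


Definition bmag (i j : nat) : nat :=
  if (j < c1)%N then c3m T (i %/ 2) (odd i) (c3k (cls T (i %/ 2)) (odd i) j)
  else if (j < c2)%N then cpa m K b0 i else stm i j.

Definition bsg (i j : nat) : bool :=
  if (j < c1)%N then c3s (odd i) (c3k (cls T (i %/ 2)) (odd i) j)
  else if (j < c2)%N then (j == c1) == cps m i else sts i j.

Lemma bf_pm i j : bf i j = pm (bsg i j) (bmag i j).
Proof. by rewrite /bf /bsg /bmag /c3v /c3e; case: ifP => _ //; case: ifP. Qed.

Lemma st_bound i j : (i < m)%N -> (c2 <= j < n)%N ->
  [/\ (i %/ 2 < T)%N, ((j - c2) %/ 4 < Q)%N & (i %/ 2 * Q + (j - c2) %/ 4 < T * Q)%N].
Proof.
move=> hi /andP [hj1 hj2].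
have [[/andP [h12 h2n] hQ hK] _] := params.
have hp : (i %/ 2 < T)%N by rewrite /T; lia.
have hq : ((j - c2) %/ 4 < Q)%N by lia.
split => //.
set p := (i %/ 2)%N in hp *; set q := ((j - c2) %/ 4)%N in hq *.
have h1 : (p * Q <= (T - 1) * Q)%N by apply: leq_mul => //; lia.
rewrite mulnBl mul1n in h1.
have : (Q <= T * Q)%N by rewrite leq_pmull //; lia.
lia.
Qed.

Lemma K5 : (5 * T <= K)%N \/ (n = 3%N \/ n = 4%N).
Proof.
have [[_ _ hK] _] := params; rewrite hK.
case: (leqP 5 n) => h; last lia.
left; rewrite mulnC; apply: leq_mul => //.
Qed.

Lemma bmag_range i j : (i < m)%N -> (j < n)%N ->
  [/\ (j < c1)%N -> (1 <= bmag i j <= 3 * T)%N,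
      (c1 <= j < c2)%N -> ((b0 + 1 <= bmag i j <= b0 + Lq)%N \/
                          ((m %% 4 == 2)%N /\ (bmag i j = K \/ bmag i j = K - 1)%N)) &
      (c2 <= j)%N -> (s0 + 1 <= bmag i j <= s0 + 4 * (T * Q))%N].
Proof.
move=> hi hj.
have hT := mT.
split.
- move=> h; rewrite /bmag h.
  have ht : (i %/ 2 < T)%N by lia.
  by apply/andP; split; [apply: c3m_pos | apply: c3m_le].
- move=> /andP [h1 h2]; rewrite /bmag ltnNge h1 /= h2 /cpa /Lq.
  have e4 : (m %% 4 == 0)%N || (m %% 4 == 2)%N by lia.
  splitifs; lia.
- move=> h; rewrite /bmag.
  have [[/andP [h12 h2n] hQ hK] _] := params.
  rewrite ifF; last lia. rewrite ifF; last lia.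
  have [hp hq hX] := st_bound hi (introT andP (conj h hj)).
  rewrite /stm.
  set X := (i %/ 2 * Q + (j - c2) %/ 4)%N in hX *.
  have : ((j - c2) %% 4 < 4)%N by rewrite ltn_mod.
  lia.
Qed.




End B1.
Section B1b.
Local Open Scope ring_scope.
Variables m n : nat.
Hypotheses (hm4 : (4 <= m)%N) (hme : ~~ odd m) (hn3 : (3 <= n)%N).

Lemma c3_lt_other i j i' j' : (i < m)%N -> (j < n)%N -> (i' < m)%N -> (j' < n)%N ->
  (j < c1 n)%N -> (c1 n <= j')%N -> (bmag m n i j < bmag m n i' j')%N.
Proof.
move=> hi hj hi' hj' ja ja'.
have [r1 _ _] := bmag_range hm4 hme hn3 hi hj.
have [_ r2' r3'] := bmag_range hm4 hme hn3 hi' hj'.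
have {}r1 := r1 ja.
have [[h12 hQ hK] P] := params hm4 hme hn3.
have hT : m = (2 * T m)%N by rewrite /T; lia.
case: (ltnP j' (c2 n)) => jb'.
- have {}r2' := r2' (introT andP (conj ja' jb')).
  case: P => [[e1 e2 e3 e4 e5]|[e1 e2 e3 e4 e5]|[e1 e2 e3 e4 e5]|[e1 e2 e3 e4 e5]]; rewrite ?e1 ?e2 ?e3 ?e4 in ja jb' r2' r1 *; lia.
- have {}r3' := r3' jb'.
  case: P => [[e1 e2 e3 e4 e5]|[e1 e2 e3 e4 e5]|[e1 e2 e3 e4 e5]|[e1 e2 e3 e4 e5]]; rewrite ?e1 ?e2 ?e3 ?e4 in ja jb' r3' r1 *; lia.
Qed.

Lemma cp_ne_st i j i' j' : (i < m)%N -> (j < n)%N -> (i' < m)%N -> (j' < n)%N ->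
  (c1 n <= j < c2 n)%N -> (c2 n <= j')%N -> bmag m n i j != bmag m n i' j'.
Proof.
move=> hi hj hi' hj' ja ja'.
have [_ r2 _] := bmag_range hm4 hme hn3 hi hj.
have [_ _ r3'] := bmag_range hm4 hme hn3 hi' hj'.
have {}r2 := r2 ja; have {}r3' := r3' ja'.
have [[h12 hQ hK] P] := params hm4 hme hn3.
have hT : m = (2 * T m)%N by rewrite /T; lia.
have hLq : (m %% 4 = 0 /\ Lq m = m \/ m %% 4 = 2 /\ Lq m = m - 2)%N by rewrite /Lq; case: ifP => ?; lia.
case: P => [[e1 e2 e3 e4 e5]|[e1 e2 e3 e4 e5]|[e1 e2 e3 e4 e5]|[e1 e2 e3 e4 e5]]; rewrite ?e1 ?e2 ?e3 ?e4 in ja r2 r3' *; lia.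
Qed.

End B1b.
Section B1c.
Local Open Scope ring_scope.
Variables m n : nat.
Hypotheses (hm4 : (4 <= m)%N) (hme : ~~ odd m) (hn3 : (3 <= n)%N).

Lemma b1_inj i j i' j' : (i < m)%N -> (j < n)%N -> (i' < m)%N -> (j' < n)%N ->
  bmag m n i j = bmag m n i' j' -> bsg m n i j = bsg m n i' j' -> i = i' /\ j = j'.
Proof.
move=> hi hj hi' hj' em es.
have hT : m = (2 * T m)%N by rewrite /T; lia.
have [[h12 hQ hK] P] := params hm4 hme hn3.
case: (ltnP j (c1 n)) => ja; case: (ltnP j' (c1 n)) => ja'.
-
  move: em es; rewrite /bmag /bsg ja ja' => em es.
  have c13 : (c1 n <= 3)%N by rewrite /c1; case: ifP.
  have ht : (i %/ 2 < T m)%N by lia.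
  have ht' : (i' %/ 2 < T m)%N by lia.
  have [et ety ek] := c3_inj ht ht' (c3k_lt _ _ (leq_trans ja c13)) (c3k_lt _ _ (leq_trans ja' c13)) em es.
  have ei : i = i' by move: et ety; lia.
  subst i'; split => //.
  exact: (c3k_inj (leq_trans ja c13) (leq_trans ja' c13) ek).
- by exfalso; move: (c3_lt_other hm4 hme hn3 hi hj hi' hj' ja ja'); rewrite em ltnn.
- by exfalso; move: (c3_lt_other hm4 hme hn3 hi' hj' hi hj ja' ja); rewrite em ltnn.
case: (ltnP j (c2 n)) => jb; case: (ltnP j' (c2 n)) => jb'.
-
  have jaf : (j < c1 n)%N = false by rewrite ltnNge ja.
  have jaf' : (j' < c1 n)%N = false by rewrite ltnNge ja'.
  move: em es; rewrite /bmag /bsg jaf jaf' jb jb' => em es.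
  have hbK : (b0 m n + m <= K m n)%N by case: P => [[*]|[*]|[*]|[*]]; lia.
  have ei := cpa_inj hi hi' hbK em; subst i'; split => //.
  have hc : (c2 n = c1 n + 2)%N by case: P => [[*]|[*]|[*]|[*]]; lia.
  have : (j == c1 n) = (j' == c1 n).
    by move: es; case: (cps m i); [rewrite !eqb_id | rewrite !eqbF_neg => /negb_inj].
  by case: eqP => a; case: eqP => b //; lia.
- by exfalso; move: (cp_ne_st hm4 hme hn3 hi hj hi' hj' (introT andP (conj ja jb)) jb'); rewrite em eqxx.
- by exfalso; move: (cp_ne_st hm4 hme hn3 hi' hj' hi hj (introT andP (conj ja' jb')) jb); rewrite em eqxx.
-
  have jaf : (j < c1 n)%N = false by rewrite ltnNge ja.
  have jaf' : (j' < c1 n)%N = false by rewrite ltnNge ja'.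
  have jbf : (j < c2 n)%N = false by rewrite ltnNge jb.
  have jbf' : (j' < c2 n)%N = false by rewrite ltnNge jb'.
  move: em es; rewrite /bmag /bsg jaf jaf' jbf jbf' /stm /sts => em es.
  have [hp hq hX] := st_bound hm4 hme hn3 hi (introT andP (conj jb hj)).
  have [hp' hq' hX'] := st_bound hm4 hme hn3 hi' (introT andP (conj jb' hj')).
  have hr : ((j - c2 n) %% 4 < 4)%N by rewrite ltn_mod.
  have hr' : ((j' - c2 n) %% 4 < 4)%N by rewrite ltn_mod.
  have eX : (i %/ 2 * Q n + (j - c2 n) %/ 4 = i' %/ 2 * Q n + (j' - c2 n) %/ 4)%N by lia.
  have er : ((j - c2 n) %% 4 = (j' - c2 n) %% 4)%N by lia.
  have [ep eqq] := mulQ_inj hq hq' eX.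
  move: es; rewrite er => /eqP es.
  have eo : odd i = odd i'.
    by move: es; case: (qpat _); case: (odd i); case: (odd i').
  split; lia.
Qed.

End B1c.
Section B1d.
Local Open Scope ring_scope.
Variables m n : nat.
Hypotheses (hm4 : (4 <= m)%N) (hme : ~~ odd m) (hn3 : (3 <= n)%N).

Lemma bf_c3 i j : (j < c1 n)%N -> bf m n i j = c3v (T m) i j.
Proof. by rewrite /bf => ->. Qed.

Lemma bf_cp i j : (c1 n <= j < c2 n)%N -> bf m n i j = pm ((j == c1 n) == cps m i) (cpa m (K m n) (b0 m n) i).
Proof. by move=> /andP [h1 h2]; rewrite /bf ltnNge h1 /= h2. Qed.

Lemma bf_st i j : (c2 n <= j)%N -> bf m n i j = pm (sts n i j) (stm m n i j).
Proof.
move=> h; have [[/andP [h12 _] _ _] _] := params hm4 hme hn3.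
rewrite /bf ifF; last by lia. by rewrite ifF //; lia.
Qed.

Lemma b1_row i : (i < m)%N -> \sum_(0 <= j < n) bf m n i j = 0.
Proof.
move=> hi.
have [[/andP [h12 h2n] hQ hK] P] := params hm4 hme hn3.
have hT : m = (2 * T m)%N by rewrite /T; lia.
have en : n = (c1 n + ((c2 n - c1 n) + 4 * Q n))%N by lia.
rewrite {1}en (sum_shift (c1 n)) (sum_shift (c2 n - c1 n)).
have -> : \sum_(0 <= j < c1 n) bf m n i j = 0.
  have [e1|e1] : c1 n = 0%N \/ c1 n = 3%N by rewrite /c1; case: ifP; [right|left].
    by rewrite e1 big_geq.
  rewrite (eq_big_nat _ _ (F2 := fun j => c3e (T m) (i %/ 2) (odd i) (c3k (cls (T m) (i %/ 2)) (odd i) j))).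
    by rewrite e1; apply: c3_row; lia.
  by move=> j hj; rewrite bf_c3 //; lia.
have -> : \sum_(0 <= j < c2 n - c1 n) bf m n i (c1 n + j) = 0.
  have [e1|e1] : (c2 n - c1 n = 0 \/ c2 n - c1 n = 2)%N by case: P => [[*]|[*]|[*]|[*]]; lia.
    by rewrite e1 big_geq.
  rewrite e1 sum2 !bf_cp; try lia.
  by rewrite addn0 eqxx addn1 (_ : ((c1 n).+1 == c1 n) = false); [case: (cps m i); rewrite /pm /=; lia | lia].
have -> : \sum_(0 <= j < 4 * Q n) bf m n i (c1 n + (c2 n - c1 n + j)) = 0.
  rewrite sum_group; apply: sum0 => v hv.
  rewrite sum4 !bf_st; try lia.
  rewrite /stm /sts.
  have e r : (r < 4)%N -> (c1 n + (c2 n - c1 n + (4 * v + r)) - c2 n = 4 * v + r)%N by lia.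
  rewrite !e //.
  have d r : (r < 4)%N -> ((4 * v + r) %/ 4 = v)%N by lia.
  have md r : (r < 4)%N -> ((4 * v + r) %% 4 = r)%N by lia.
  rewrite !d // !md //= /pm; case: (odd i) => /=; lia.
by rewrite !add0r.
Qed.

End B1d.
Section B1e.
Local Open Scope ring_scope.
Variables m n : nat.
Hypotheses (hm4 : (4 <= m)%N) (hme : ~~ odd m) (hn3 : (3 <= n)%N).

Lemma b1_col j : (j < n)%N -> exists k : int, \sum_(0 <= i < m) bf m n i j = k * (m * n + 1)%N%:Z.
Proof.
move=> hj.
have [[/andP [h12 h2n] hQ hK] P] := params hm4 hme hn3.
have hT : m = (2 * T m)%N by rewrite /T; lia.
case: (ltnP j (c1 n)) => ja.
  exists 0; rewrite mul0r {1}hT.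
  have c13 : (c1 n <= 3)%N by rewrite /c1; case: ifP.
  rewrite (eq_big_nat _ _ (F2 := fun i => c3v (T m) i j)); last by move=> i _; rewrite bf_c3.
  apply: c3_col; lia.
case: (ltnP j (c2 n)) => jb.
  have hcp : \sum_(0 <= i < m) cpx m (K m n) (b0 m n) i =
      (if (m %% 4 == 2)%N then 1 else 0) * (m * n + 1)%N%:Z.
    rewrite cp_sum; try lia.
    have -> : ((m %% 4 == 1) = false)%N by lia.
    have hmn : (m * n = 2 * K m n)%N by rewrite hK {1}hT mulnA.
    have [e2|e2] := boolP (m %% 4 == 2)%N.
      by rewrite /= mul1r; lia.
    by rewrite /= mul0r.
  have [e|e] := boolP (j == c1 n).
    exists (if (m %% 4 == 2)%N then 1 else 0); rewrite -hcp.
    by apply: eq_big_nat => i _; rewrite bf_cp ?ja ?jb // e.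
  exists (- (if (m %% 4 == 2)%N then 1 else 0)); rewrite mulNr -hcp -sumrN.
  apply: eq_big_nat => i _; rewrite bf_cp ?ja ?jb //.
  by rewrite (negbTE e) /cpx; case: (cps m i); rewrite /pm ?opprK.
exists 0; rewrite mul0r {1}hT sum_group; apply: sum0 => p hp.
rewrite sum2 !bf_st //.
rewrite /stm /sts.
have -> : ((2 * p + 0) %/ 2 = p)%N by lia.
have -> : ((2 * p + 1) %/ 2 = p)%N by lia.
have -> : odd (2 * p + 0) = false by lia.
have -> : odd (2 * p + 1) = true by lia.
by case: (qpat _); rewrite /pm /=; lia.
Qed.

Lemma b1_good : good m n (bf m n).
Proof.
have [[/andP [h12 h2n] hQ hK] P] := params hm4 hme hn3.
have hT : m = (2 * T m)%N by rewrite /T; lia.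
split.
- move=> i j hi hj; rewrite bf_pm; split.
    apply: pm_neq0.
    have [r1 r2 r3] := bmag_range hm4 hme hn3 hi hj.
    case: (ltnP j (c1 n)) => ja; first by have := r1 ja; lia.
    case: (ltnP j (c2 n)) => jb; first by have := r2 (introT andP (conj ja jb)); case: P => [[*]|[*]|[*]|[*]]; lia.
    by have := r3 jb; lia.
  rewrite pm_abs.
  have [r1 r2 r3] := bmag_range hm4 hme hn3 hi hj.
  have hLq : (m %% 4 = 0 /\ Lq m = m \/ m %% 4 = 2 /\ Lq m = m - 2)%N by rewrite /Lq; case: ifP => ?; lia.
  have hmn : (m * n = 2 * K m n)%N by rewrite hK {1}hT mulnA.
  rewrite hmn.
  case: (ltnP j (c1 n)) => ja; first by have := r1 ja; case: P => [[*]|[*]|[*]|[*]]; lia.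
  case: (ltnP j (c2 n)) => jb; first by have := r2 (introT andP (conj ja jb)); case: P => [[*]|[*]|[*]|[*]]; lia.
  by have := r3 jb; case: P => [[*]|[*]|[*]|[*]]; lia.
- move=> i j i' j' hi hj hi' hj'; rewrite !bf_pm => e.
  have [r1 r2 r3] := bmag_range hm4 hme hn3 hi hj.
  have hpos : (0 < bmag m n i j)%N.
    case: (ltnP j (c1 n)) => ja; first by have := r1 ja; lia.
    case: (ltnP j (c2 n)) => jb; first by have := r2 (introT andP (conj ja jb)); case: P => [[*]|[*]|[*]|[*]]; lia.
    by have := r3 jb; lia.
  have [es em] := pm_eq hpos e.
  exact: (b1_inj hm4 hme hn3 hi hj hi' hj' em es).
- move=> i hi; exists 0; rewrite mul0r -(big_mkord xpredT (fun j => bf m n i j)).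
  exact: b1_row.
- move=> j hj; rewrite -(big_mkord xpredT (fun i => bf m n i j)).
  exact: b1_col.
Qed.

End B1e.
Section Nec.
Local Open Scope ring_scope.

Lemma sum_Zp (N : nat) : (1 < N)%N -> \sum_(x : 'Z_N) x = ('C(N, 2))%:R.
Proof.
case: N => [|[|k]] // _.
rewrite (eq_bigr (fun x : 'Z_k.+2 => (x : nat)%:R)); last by move=> x _; rewrite natr_Zp.
rewrite -natr_sum; congr (_%:R).
by rewrite -triangular_sum big_mkord.
Qed.

End Nec.
Section Nec2.
Local Open Scope ring_scope.

Lemma nec m n (A : 'M[option 'Z_(m * n + 1)]_(m, n)) : (2 <= m)%N -> (2 <= n)%N ->
  @zero_sum_magic_pfa _ (Zstar (m * n + 1)) m n n m A -> odd (m * n + 1) /\ (5 < m * n + 1)%N.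
Proof.
move=> hm hn [hin [honce [hrow [hcol [hrs hcs]]]]].
have N1 : (1 < m * n + 1)%N by lia.
have filled i j : A i j != None.
  have := hrow i.
  have : [set j | A i j != None] \subset [set: 'I_n] by apply/subsetP.
  move=> hs hc.
  have : [set j | A i j != None] = [set: 'I_n].
    by apply/eqP; rewrite eqEcard hs cardsT card_ord hc leqnn.
  by move/setP/(_ j); rewrite !inE.
pose g (p : 'I_m * 'I_n) := odflt 0 (A p.1 p.2).
have hA p : A p.1 p.2 = Some (g p).
  by rewrite /g; move: (filled p.1 p.2); case: (A p.1 p.2).
have gin p : g p \in Zstar (m * n + 1) by apply: (hin p.1 p.2); apply: hA.
have ginj : injective g.
  move=> p q e.
  have := honce _ (gin p) => /eqP /cards1P [r hr].
  have : p \in [set r] by rewrite -hr inE hA.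
  have : q \in [set r] by rewrite -hr inE hA e.
  by rewrite !inE => /eqP -> /eqP ->.
have imE : g @: setT = Zstar (m * n + 1).
  apply/setP => x; apply/imsetP/idP => [[p _ ->] //|hx].
  have := honce _ hx => /eqP /cards1P [r hr].
  have : r \in [set r] by rewrite inE.
  rewrite -hr inE hA => /eqP [<-]; by exists r.
have sum0 : \sum_(x in Zstar (m * n + 1)) x = 0.
  rewrite -imE big_imset /=; last by move=> p q _ _; apply: ginj.
  rewrite (eq_bigl xpredT); last by move=> p; rewrite inE.
  have -> : \sum_(p : 'I_m * 'I_n) g p = \sum_(i : 'I_m) \sum_(j : 'I_n) g (i, j).
    by rewrite pair_bigA; apply: eq_bigr => -[i j].
  by apply: big1 => i _; rewrite -[RHS](hrs i); apply: eq_bigr => j _; rewrite /g.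
have sumall : \sum_(x : 'Z_(m * n + 1)) x = 0.
  by rewrite (bigD1 0) //= add0r -[RHS]sum0; apply: eq_bigl => x; rewrite /Zstar inE.
have oddN : odd (m * n + 1).
  apply/negP => ev.
  have := sumall; rewrite sum_Zp // => /(congr1 (@nat_of_ord _)).
  rewrite val_Zp_nat //= bin2.
  have [M eM] : exists M, (m * n + 1 = 2 * M)%N by exists ((m * n + 1) %/ 2)%N; lia.
  have M1 : (1 <= M)%N by lia.
  rewrite eM.
  have e1 : ((2 * M * (2 * M).-1)./2 = M * (2 * M).-1)%N by rewrite -mulnA mul2n half_double.
  have e2 : (M * (2 * M).-1 = (M - 1) * (2 * M) + M)%N.
    have -> : ((2 * M).-1 = 2 * (M - 1) + 1)%N by lia.
    by rewrite mulnDr muln1 mulnCA (mulnC (M - 1)%N) mulnA.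
  rewrite e1 e2 modnMDl modn_small; lia.
have N5 : (5 < m * n + 1)%N.
  case: (ltnP 5 (m * n + 1)) => // h.
  have em : m = 2%N by nia.
  have en : n = 2%N by nia.
  subst m n; exfalso.
  have r0 := hrs ord0; have c0 := hcs ord0.
  rewrite !big_ord_recr !big_ord0 /= !add0r in r0 c0.
  have w : widen_ord (leqnSn 1) ord_max = ord0 :> 'I_2 by apply: val_inj.
  rewrite w in r0 c0.
  have e : g (ord0, ord_max) = g (ord_max, ord0).
    rewrite /g /=; apply: (addrI (odflt 0 (A ord0 ord0))).
    by rewrite r0 c0.
  by have := ginj _ _ e.
by [].
Qed.
End Nec2.

Theorem mainTheorem15 (m n : nat) (hm : (2 <= m)%N) (hn : (2 <= n)%N) :
  (exists A : 'M[option 'Z_(m * n + 1)]_(m, n),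
      @zero_sum_magic_pfa _ (Zstar (m * n + 1)) m n n m A)
  <-> (odd (m * n + 1) /\ (5 < m * n + 1)%N).
Proof.
split; first by case=> A; apply: nec.
case=> ho h5.
suff [f hf] : exists f, good m n f by apply: (good_pfa _ _ hf); lia.
have [n2|n2] := eqVneq n 2.
  subst n; exists (b2f m); apply: b2_good; lia.
have [m2|m2] := eqVneq m 2.
  subst m; exists (fun i j => b2f n j i); apply: good_tr; apply: b2_good; lia.
case om: (odd m).
  have on : ~~ odd n by move: ho; rewrite oddD oddM om /= addbT.
  exists (fun i j => bf n m j i); apply: good_tr; apply: b1_good => //; lia.
exists (bf m n); apply: b1_good; [lia | by rewrite om | lia].
Qed.
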